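(* Let $\tau$ be a row-standard tableau. Then there exists a sequence of integers $i_1,\dots,i_m$ such that $\mathrm{st}(\tau)=\delta_{i_1}\cdots\delta_{i_m}(\tau)$ (each $\delta_{i_k}$ being applied to a tableau lying in $D_{i_k}$), and $n_{\mathrm{inv}}(\tau)$ is the minimal length $m$ of such a sequence.
   Context: Fix a Young diagram $Y$ with $n$ boxes. A row-standard tableau of shape $Y$ is a bijective numbering of its boxes by $1,\dots,n$ increasing left to right along rows; it is standard if also increasing top to bottom along columns. The standardization $\mathrm{st}(\tau)$ of a row-standard $\tau$ is the standard tableau obtained by rearranging the entries of each column of $\tau$ in increasing order from top to bottom. An inversion of $\tau$ is a pair $i<j$ in the same column such that either (i) $i$ or $j$ has no box immediately to its right and $i$ is below $j$, or (ii) $i,j$ have right neighbours $i',j'$ with $i'>j'$; $n_{\mathrm{inv}}(\tau)$ is their number. For $i\in\{1,\dots,n\}$, $D_i$ is the set of row-standard $\tau$ such that: (1) $i$ is not in the first row, and letting $j$ be the entry immediately above $i$: (2) if $i$ has a right neighbour $i'$ then $j<i'$, and if $j$ has a right neighbour $j'$ then $i<j'$; (3) for every $k$ in the same column as $i,j$ with $\min(i,j)<k<\max(i,j)$, exactly one of $(\min(i,j),k)$, $(k,\max(i,j))$ is an inversion. For $\tau\in D_i$, with $i_1<\dots<i_q=i$ the entries of the row of $i$ up to $i$ and $j_1<\dots<j_q=j$ those of the row of $j$ up to $j$, $\delta_i(\tau)$ is obtained by swapping $i_k$ and $j_k$ for all $k\le q$. *)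

(* Defs.v *)
From mathcomp Require Import all_boot.
Set Implicit Arguments. Unset Strict Implicit. Unset Printing Implicit Defensive.

(* A Young diagram is given by its row lengths, top row first:
   a weakly decreasing sequence of positive integers. *)
Definition is_partition (lam : seq nat) : bool :=
  sorted geq lam && all (fun k => 0 < k) lam.

(* A tableau is the list of its rows (top to bottom), each row read left to right.
   Box (r, c) holds  nth 0 (nth [::] t r) c. *)
Definition tableau := seq (seq nat).

Definition row_standard (lam : seq nat) (t : tableau) : bool :=
  [&& shape t == lam,
      perm_eq (flatten t) (iota 1 (sumn lam)) &
      all (sorted ltn) t].

Definition rowof (t : tableau) (x : nat) : nat := find (fun row => x \in row) t.
Definition rowseq (t : tableau) (r : nat) : seq nat := nth [::] t r.
Definition colof (t : tableau) (x : nat) : nat := index x (rowseq t (rowof t x)).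
Definition entry (t : tableau) (r c : nat) : nat := nth 0 (rowseq t r) c.

Definition has_right (t : tableau) (x : nat) : bool :=
  (colof t x).+1 < size (rowseq t (rowof t x)).
Definition right_nb (t : tableau) (x : nat) : nat :=
  entry t (rowof t x) (colof t x).+1.

Definition same_col (t : tableau) (a b : nat) : bool :=
  [&& a \in flatten t, b \in flatten t & colof t a == colof t b].

Definition is_inv (t : tableau) (a b : nat) : bool :=
  [&& a < b, same_col t a b &
      ((~~ has_right t a || ~~ has_right t b) && (rowof t b < rowof t a))
      || [&& has_right t a, has_right t b & right_nb t b < right_nb t a]].

Definition n_inv (t : tableau) : nat :=
  count (fun p => is_inv t p.1 p.2) [seq (a, b) | a <- flatten t, b <- flatten t].

Definition colseq (t : tableau) (c : nat) : seq nat :=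
  [seq nth 0 row c | row <- t & c < size row].

Definition st (t : tableau) : tableau :=
  mkseq (fun r => mkseq (fun c => nth 0 (sort leq (colseq t c)) r)
                        (size (rowseq t r))) (size t).

Definition in_D (i : nat) (t : tableau) : bool :=
  let r := rowof t i in
  let c := colof t i in
  let j := entry t r.-1 c in
  let lo := minn i j in
  let hi := maxn i j in
  [&& i \in flatten t, 0 < r,
      has_right t i ==> (j < right_nb t i),
      has_right t j ==> (i < right_nb t j) &
      all (fun k => (lo < k < hi) ==> (is_inv t lo k (+) is_inv t k hi))
          (colseq t c)].

Definition delta (i : nat) (t : tableau) : tableau :=
  let r := rowof t i in
  let c := colof t i in
  let R := rowseq t r in
  let U := rowseq t r.-1 in
  mkseq (fun s =>
     if s == r then take c.+1 U ++ drop c.+1 R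
     else if s == r.-1 then take c.+1 R ++ drop c.+1 U
     else rowseq t s) (size t).

(* apply_deltas [:: i_1; ...; i_m] t = Some (delta_{i_1} (... (delta_{i_m} t)))
   provided each delta_{i_k} is applied to a tableau lying in D_{i_k};
   None otherwise. *)
Fixpoint apply_deltas (s : seq nat) (t : tableau) : option tableau :=
  match s with
  | [::] => Some t
  | i :: s' =>
      match apply_deltas s' t with
      | Some u => if in_D i u then Some (delta i u) else None
      | None => None
      end
  end.

(* Main.v *)
Require Import Defs.
From mathcomp Require Import all_boot.
From Stdlib Require Import Lia.
Set Implicit Arguments. Unset Strict Implicit. Unset Printing Implicit Defensive.

Lemma leq_le_ a b : a <= b -> (a <= b)%coq_nat. Proof. by move/leP. Qed.
Lemma nleq_lt_ a b : ~~ (a <= b) -> (b < a)%coq_nat. Proof. by rewrite -ltnNge => /leP. Qed.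
Lemma eqn_eq_ (a b : nat) : a == b -> a = b. Proof. by move/eqP. Qed.
Lemma neqn_ne_ (a b : nat) : a != b -> a <> b. Proof. by move/eqP. Qed.

Ltac mlia := intros; repeat match goal with x := _ |- _ => clearbody x end; repeat match goal with
 | H : is_true (~~ (leq ?a ?b)) |- _ =>
     lazymatch goal with _ : (b < a)%coq_nat |- _ => fail | _ => have := nleq_lt_ H; intro end
 | H : is_true (leq ?a ?b) |- _ =>
     lazymatch goal with _ : (a <= b)%coq_nat |- _ => fail | _ => have := leq_le_ H; intro end
 | H : is_true (@eq_op _ ?a ?b) |- _ =>
     lazymatch type of a with nat =>
     lazymatch goal with _ : a = b |- _ => fail | _ => have := eqn_eq_ H; intro end end
 | H : is_true (~~ (@eq_op _ ?a ?b)) |- _ =>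
     lazymatch type of a with nat =>
     lazymatch goal with _ : a <> b |- _ => fail | _ => have := neqn_ne_ H; intro end end
 | |- is_true (_ && _) => apply/andP; split
 | H : is_true (_ && _) |- _ => let A := fresh in let B := fresh in case/andP: H => A B
 | |- is_true (~~ (leq _ _)) => rewrite -ltnNge
 | |- is_true (leq _ _) => apply/leP
 | |- is_true (~~ (_ == _)) => apply/eqP
 | |- is_true (_ == _) => apply/eqP
 end; unfold addn, subn, muln in *; lia.

Lemma mem_rowseq_flatten t r x : x \in rowseq t r -> x \in flatten t.
Proof.
rewrite /rowseq => Hx; have Hr : r < size t.
  by case: ltnP => // H; rewrite nth_default in Hx.
by apply/flattenP; exists (nth [::] t r) => //; apply: mem_nth.
Qed.

Lemma find_row t r x : uniq (flatten t) -> r < size t -> x \in rowseq t r ->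
  rowof t x = r.
Proof.
rewrite /rowof /rowseq; elim: t r => [|row t IH] [|r] //=.
  by move=> _ _ ->.
rewrite cat_uniq => /and3P [_ Hd Hu] Hr Hx.
have Hf : x \in flatten t by apply: (@mem_rowseq_flatten t r).
have -> : (x \in row) = false.
  by apply/negP => Hxr; move/hasP: Hd; apply; exists x.
by rewrite (IH r).
Qed.

Lemma uniq_row t r : uniq (flatten t) -> uniq (rowseq t r).
Proof.
rewrite /rowseq; elim: t r => [|row t IH] [|r] //=; rewrite cat_uniq => /and3P [H1 _ H3] //.
exact: IH.
Qed.

Lemma pos_entry t r c : uniq (flatten t) -> r < size t -> c < size (rowseq t r) ->
  rowof t (entry t r c) = r /\ colof t (entry t r c) = c.
Proof.
move=> Hu Hr Hc.
have Hm : entry t r c \in rowseq t r by apply: mem_nth.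
have Hrow := find_row Hu Hr Hm.
split=> //; rewrite /colof Hrow /entry index_uniq //; exact: uniq_row.
Qed.

Lemma flatten_pos t x : x \in flatten t ->
  [/\ rowof t x < size t, colof t x < size (rowseq t (rowof t x)) &
      entry t (rowof t x) (colof t x) = x].
Proof.
move=> /flattenP [row Hrow Hx].
have Hh : has (fun row => x \in row) t by apply/hasP; exists row.
have Hlt : rowof t x < size t by rewrite /rowof -has_find.
have Hin : x \in rowseq t (rowof t x) by rewrite /rowseq; exact: (nth_find [::] Hh).
split=> //; first by rewrite /colof index_mem.
by rewrite /entry /colof nth_index.
Qed.

Lemma entry_mem t r c : r < size t -> c < size (rowseq t r) -> entry t r c \in flatten t.
Proof. move=> Hr Hc; apply: (@mem_rowseq_flatten t r); exact: mem_nth. Qed.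

Lemma entry_inj t r1 c1 r2 c2 : uniq (flatten t) ->
  r1 < size t -> c1 < size (rowseq t r1) -> r2 < size t -> c2 < size (rowseq t r2) ->
  entry t r1 c1 = entry t r2 c2 -> r1 = r2 /\ c1 = c2.
Proof.
move=> Hu H1 H2 H3 H4 He.
have [A B] := pos_entry Hu H1 H2; have [C D] := pos_entry Hu H3 H4.
by split; [rewrite -A He C | rewrite -B He D].
Qed.

Lemma size_mono t r1 r2 : sorted geq (shape t) -> r1 <= r2 ->
  size (rowseq t r2) <= size (rowseq t r1).
Proof.
move=> Hs Hle; case: (ltnP r2 (size t)) => Hr2; last first.
  by rewrite /rowseq nth_default.
have Hr1 : r1 < size t by apply: leq_ltn_trans Hr2.
have := sorted_leq_nth (fun y x z (H1 : geq x y) (H2 : geq y z) => leq_trans H2 H1) (@leqnn) 0 Hs.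
move=> /(_ r1 r2); rewrite !inE size_map => /(_ Hr1 Hr2 Hle).
by rewrite /shape !(nth_map [::]).
Qed.

Definition aft (ha : bool) (na ra : nat) (hb : bool) (nb rb : nat) : bool :=
  if ha && hb then nb < na else rb < ra.

Definition after t a b :=
  aft (has_right t a) (right_nb t a) (rowof t a) (has_right t b) (right_nb t b) (rowof t b).

Lemma is_invE t a b : is_inv t a b = [&& a < b, same_col t a b & after t a b].
Proof.
rewrite /is_inv /after /aft.
by case: (has_right t a); case: (has_right t b); rewrite /= ?orbF ?andbT.
Qed.

Lemma after_antisym t a b : uniq (flatten t) -> a \in flatten t -> b \in flatten t ->
  a != b -> colof t a = colof t b -> after t b a = ~~ after t a b.
Proof.
move=> Hu Ha Hb Hab Hc.
have [A1 A2 A3] := flatten_pos Ha; have [B1 B2 B3] := flatten_pos Hb.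
have Hr : rowof t a != rowof t b.
  apply/eqP => E; move/eqP: Hab; apply; rewrite -A3 -B3 E Hc //.
rewrite /after /aft andbC.
case Hha: (has_right t a); case Hhb: (has_right t b) => /=;
  try by case: ltngtP Hr => // _ _; rewrite ?ltnNge ?leq_eqVlt.
have Hn : right_nb t a != right_nb t b.
  apply/eqP => E.
  have := @entry_inj t (rowof t a) (colof t a).+1 (rowof t b) (colof t b).+1 Hu A1 Hha B1 Hhb E.
  by case=> E1 _; move/eqP: Hr.
by case: ltngtP Hn.
Qed.

Lemma count_sum (T : Type) (p : pred T) (g : seq T) : count p g = \sum_(b <- g) p b.
Proof. by elim: g => [|x g IH] /=; rewrite ?big_nil ?big_cons ?IH. Qed.

Lemma count_pairs (p : pred (nat * nat)) (f g : seq nat) :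
  count p [seq (a, b) | a <- f, b <- g] = \sum_(a <- f) \sum_(b <- g) p (a, b).
Proof.
elim: f => [|a f IH] /=; first by rewrite big_nil.
by rewrite count_cat IH big_cons count_map count_sum.
Qed.

Lemma n_invE t : n_inv t = \sum_(a <- flatten t) \sum_(b <- flatten t) is_inv t a b.
Proof. by rewrite /n_inv count_pairs. Qed.

Lemma sum2_decomp (Q : nat -> nat -> bool) (f : seq nat) i j :
  uniq f -> i \in f -> j \in f -> i != j ->
  \sum_(a <- f) \sum_(b <- f) (Q a b : nat) =
  Q i i + Q j j + (Q i j + Q j i) +
  \sum_(k <- [seq x <- f | (x != i) && (x != j)]) (Q i k + Q k i + Q j k + Q k j : nat) +
  \sum_(a <- [seq x <- f | (x != i) && (x != j)]) \sum_(b <- [seq x <- f | (x != i) && (x != j)]) (Q a b : nat).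
Proof.
move=> Hu Hi Hj Hij; set F := [seq x <- f | _].
have Hp : perm_eq f (i :: j :: F).
  apply: uniq_perm => //.
    rewrite /= inE negb_or Hij /F !mem_filter !eqxx /= andbF filter_uniq // andbT.
  move=> x; rewrite !inE /F mem_filter.
  case: (eqVneq x i) => [->|Hxi]; first by rewrite Hi.
  by case: (eqVneq x j) => [->|Hxj] //=; rewrite Hj.
rewrite (perm_big _ Hp) /=.
under eq_bigr => a _ do rewrite (perm_big _ Hp) /= !big_cons.
rewrite !big_cons !big_split /=.
mlia.
Qed.


Lemma bool_k (i j k : nat) (a1 b1 : bool) : i < j -> k != i -> k != j ->
  (i < k < j -> (i < k) && a1 (+) (k < j) && ~~ b1) ->
  ((i < k) && b1 : nat) + (k < i) && ~~ b1 + (j < k) && a1 + (k < j) && ~~ a1 =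
  ((i < k) && a1 : nat) + (k < i) && ~~ a1 + (j < k) && b1 + (k < j) && ~~ b1.
Proof.
move=> Hij Hki Hkj H.
case: (ltngtP i k) Hki H => Hik Hki H; last by move: Hki; rewrite ?Hik ?eqxx.
- case: (ltngtP j k) Hkj H => Hjk Hkj H; last by move: Hkj; rewrite ?Hjk ?eqxx.
  + by case: a1 H; case: b1.
  + by move: H => /= /(_ isT); case: a1; case: b1.
- have Hkj' : k < j by apply: ltn_trans Hij.
  have Hjk : (j < k) = false by apply/negbTE; rewrite -leqNgt ltnW.
  by rewrite Hkj' Hjk /=; case: a1 H; case: b1.
Qed.

Lemma flatten_perm2 (t t' : tableau) r : 0 < r -> r < size t -> size t' = size t ->
  (forall s, s != r.-1 -> s != r -> rowseq t' s = rowseq t s) ->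
  perm_eq (rowseq t' r.-1 ++ rowseq t' r) (rowseq t r.-1 ++ rowseq t r) ->
  perm_eq (flatten t') (flatten t).
Proof.
move=> Hr0 Hr Hsz Heq Hp.
have Hr1 : r.-1 < size t by apply: leq_ltn_trans (leq_pred r) Hr.
have Hr1' : r.-1 < size t' by rewrite Hsz.
have Hr' : r < size t' by rewrite Hsz.
have Edr : forall u : tableau, r < size u -> drop r.-1 u = nth [::] u r.-1 :: nth [::] u r :: drop r.+1 u.
  move=> u Hu; rewrite (drop_nth [::]); last by apply: leq_ltn_trans (leq_pred r) Hu.
  by rewrite prednK // (drop_nth [::] Hu).
rewrite -(cat_take_drop r.-1 t') -(cat_take_drop r.-1 t) (Edr _ Hr) (Edr _ Hr').
have -> : take r.-1 t' = take r.-1 t.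
  apply: (@eq_from_nth _ [::]); first by rewrite !size_take Hsz.
  move=> k; rewrite size_take Hsz => Hk.
  rewrite Hr1 in Hk.
  rewrite !nth_take //; apply: Heq; mlia.
have -> : drop r.+1 t' = drop r.+1 t.
  apply: (@eq_from_nth _ [::]); first by rewrite !size_drop Hsz.
  move=> k _; rewrite !nth_drop; apply: Heq; mlia.
rewrite !flatten_cat /=; apply: perm_cat => //.
by rewrite !catA; apply: perm_cat.
Qed.

Lemma row_lt t s d1 d2 : all (sorted ltn) t -> d1 < d2 -> d2 < size (rowseq t s) ->
  entry t s d1 < entry t s d2.
Proof.
move=> Ha H12 H2.
have Hs : s < size t by case: ltnP => // H; move: H2; rewrite /rowseq nth_default.
have Hso : sorted ltn (rowseq t s) by apply: (allP Ha); apply: mem_nth.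
by apply: (sorted_ltn_nth ltn_trans 0 Hso) => //; rewrite inE; apply: ltn_trans H2.
Qed.

Lemma mem_colseq t k : k \in flatten t -> k \in colseq t (colof t k).
Proof.
move=> Hk; have [P1 P2 P3] := flatten_pos Hk.
apply/mapP; exists (rowseq t (rowof t k)) => //.
by rewrite mem_filter P2 /=; apply: mem_nth.
Qed.

Section Delta.
Set Default Proof Using "All".
Variables (t : tableau) (i r c : nat).
Hypotheses (Hsh : sorted geq (shape t)) (Hu : uniq (flatten t))
  (Hr : rowof t i = r) (Hc : colof t i = c) (Hi : i \in flatten t) (Hr0 : 0 < r).

Let U := rowseq t r.-1.
Let R := rowseq t r.
Let j := entry t r.-1 c.

Lemma rsize : r < size t.
Proof. by have [A _ _] := flatten_pos Hi; rewrite -Hr. Qed.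
Lemma csize : c < size R.
Proof. by have [_ A _] := flatten_pos Hi; rewrite /R -Hr -Hc. Qed.
Lemma ientry : entry t r c = i.
Proof. by have [_ _ A] := flatten_pos Hi; rewrite -Hr -Hc. Qed.
Lemma RU : size R <= size U.
Proof. apply: size_mono => //; exact: leq_pred. Qed.
Lemma r1size : r.-1 < size t.
Proof. by apply: leq_ltn_trans (leq_pred r) rsize. Qed.
Lemma csizeU : c < size U.
Proof. exact: leq_trans csize RU. Qed.
Lemma jpos : rowof t j = r.-1 /\ colof t j = c.
Proof. exact: pos_entry Hu r1size csizeU. Qed.
Lemma j_mem : j \in flatten t.
Proof. exact: entry_mem r1size csizeU. Qed.
Lemma ij_neq : i != j.
Proof.
apply/eqP => E; have := @entry_inj t r c r.-1 c Hu rsize csize r1size csizeU.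
rewrite ientry -/j => /(_ E) [E1 _]; mlia.
Qed.
Lemma r1r : (r.-1 == r) = false.
Proof. apply/eqP; mlia. Qed.

Lemma delta_unfold : delta i t = mkseq (fun s => if s == r then take c.+1 U ++ drop c.+1 R
   else if s == r.-1 then take c.+1 R ++ drop c.+1 U else rowseq t s) (size t).
Proof. by rewrite /delta Hr Hc. Qed.

Lemma size_delta : size (delta i t) = size t.
Proof. by rewrite delta_unfold size_mkseq. Qed.

Lemma rowseq_delta s : rowseq (delta i t) s = if s == r then take c.+1 U ++ drop c.+1 R
   else if s == r.-1 then take c.+1 R ++ drop c.+1 U else rowseq t s.
Proof.
case: (ltnP s (size t)) => Hs.
  by rewrite /rowseq delta_unfold nth_mkseq.
rewrite /rowseq nth_default ?size_delta //.
have H1 : (s == r) = false by apply/eqP => E; move: rsize; rewrite -E; mlia.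
have H2 : (s == r.-1) = false by apply/eqP => E; move: r1size; rewrite -E; mlia.
by rewrite H1 H2 nth_default.
Qed.

Lemma size_row_delta s : size (rowseq (delta i t) s) = size (rowseq t s).
Proof.
have H1 := csize; have H2 := RU.
rewrite rowseq_delta; case: eqP => [->|_]; last case: eqP => [->|_] //.
  by rewrite size_cat size_takel ?size_drop -/R; mlia.
by rewrite size_cat size_takel ?size_drop -/U; mlia.
Qed.

Lemma entry_delta s d : entry (delta i t) s d =
  if (s == r) && (d <= c) then entry t r.-1 d
  else if (s == r.-1) && (d <= c) then entry t r d else entry t s d.
Proof.
have H1 := csize; have H2 := RU.
rewrite /entry rowseq_delta; case: eqP => [->|Hs]; last case: eqP => [->|Hs'] //.
- rewrite nth_cat size_takel; last by mlia.
  case: (leqP d c) => Hd /=.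
    by rewrite ltnS Hd nth_take.
  rewrite ltnNge Hd /= nth_drop subnKC //; by case: ifP.
- rewrite /= nth_cat size_takel; last by mlia.
  case: (leqP d c) => Hd /=.
    by rewrite ltnS Hd nth_take.
  rewrite ltnNge Hd /= nth_drop subnKC //.
Qed.

Lemma perm_delta : perm_eq (flatten (delta i t)) (flatten t).
Proof.
have H1 := csize; have H2 := RU.
apply: (flatten_perm2 Hr0 rsize size_delta).
  by move=> s /negbTE A /negbTE B; rewrite rowseq_delta A B.
rewrite !rowseq_delta eqxx r1r eqxx -/U -/R.
apply/permP => p; rewrite !count_cat.
have EU : count p U = count p (take c.+1 U) + count p (drop c.+1 U) by rewrite -count_cat cat_take_drop.
have ER : count p R = count p (take c.+1 R) + count p (drop c.+1 R) by rewrite -count_cat cat_take_drop.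
rewrite EU ER; mlia.
Qed.

Lemma uniq_delta : uniq (flatten (delta i t)).
Proof. by rewrite (perm_uniq perm_delta). Qed.

Lemma mem_delta x : (x \in flatten (delta i t)) = (x \in flatten t).
Proof. exact: (perm_mem perm_delta x). Qed.

Definition np s d := if d <= c then (if s == r then r.-1 else if s == r.-1 then r else s) else s.

Lemma np_prop s d : s < size t -> d < size (rowseq t s) ->
  [/\ np s d < size t, d < size (rowseq t (np s d)) & entry (delta i t) (np s d) d = entry t s d].
Proof.
move=> Hs Hd; have H1 : c < size (rowseq t r) := csize.
have H2 : size (rowseq t r) <= size (rowseq t r.-1) := RU.
have H3 := rsize; have H4 := r1size.
rewrite /np entry_delta; case: (leqP d c) => Hdc /=; last first.
  by rewrite !andbF; split.
case: (eqVneq s r) => [->|Hsr]; first by rewrite r1r eqxx ?Hdc /=; split => //; mlia.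
case: (eqVneq s r.-1) => [->|Hsr1]; first by rewrite eqxx ?Hdc /=; split => //; mlia.
by rewrite (negbTE Hsr) (negbTE Hsr1); split.
Qed.

Lemma data_delta x : x \in flatten t ->
  let s := rowof t x in let d := colof t x in
  [/\ colof (delta i t) x = d, rowof (delta i t) x = np s d,
      has_right (delta i t) x = (d.+1 < size (rowseq t (np s d))) &
      right_nb (delta i t) x = entry (delta i t) (np s d) d.+1].
Proof.
move=> Hx s d; have [A1 A2 A3] := flatten_pos Hx.
have [B1 B2 B3] := np_prop A1 A2.
have B1' : np s d < size (delta i t) by rewrite size_delta.
have B2' : d < size (rowseq (delta i t) (np s d)) by rewrite size_row_delta.
have [C1 C2] := pos_entry uniq_delta B1' B2'.
rewrite -/s -/d B3 A3 in C1 C2.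
by rewrite /has_right /right_nb C1 C2 size_row_delta.
Qed.

Lemma data_i : [/\ rowof (delta i t) i = r.-1, colof (delta i t) i = c,
  has_right (delta i t) i = has_right t j & right_nb (delta i t) i = right_nb t j].
Proof.
have [A1 A2 A3 A4] := data_delta Hi; rewrite Hr Hc /np leqnn eqxx in A1 A2 A3 A4.
have [J1 J2] := jpos.
rewrite A1 A2 A3 A4 /has_right /right_nb J1 J2 entry_delta r1r /=.
by rewrite ltnn andbF.
Qed.

Lemma data_j : [/\ rowof (delta i t) j = r, colof (delta i t) j = c,
  has_right (delta i t) j = has_right t i & right_nb (delta i t) j = right_nb t i].
Proof.
have [J1 J2] := jpos.
have [A1 A2 A3 A4] := data_delta j_mem; rewrite J1 J2 /np leqnn r1r eqxx in A1 A2 A3 A4.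
rewrite A1 A2 A3 A4 /has_right /right_nb Hr Hc entry_delta eqxx /=.
by rewrite ltnn andbF.
Qed.

Lemma data_other x : x \in flatten t -> x != i -> x != j ->
  [/\ colof (delta i t) x = colof t x, has_right (delta i t) x = has_right t x,
      right_nb (delta i t) x = right_nb t x &
      rowof (delta i t) x = rowof t x \/
      [/\ colof t x < c, has_right t x, r.-1 <= rowof t x <= r & r.-1 <= rowof (delta i t) x <= r]].
Proof.
move=> Hx Hxi Hxj.
have [A1 A2 A3 A4] := data_delta Hx.
have [P1 P2 P3] := flatten_pos Hx.
have H1 : c < size (rowseq t r) := csize.
have H2 : size (rowseq t r) <= size (rowseq t r.-1) := RU.
move: A2 A3 A4; rewrite A1 /np /has_right /right_nb.
set s := rowof t x; set d := colof t x; move: P1 P2 P3; rewrite -/s -/d => P1 P2 P3.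
case: (leqP d c) => Hdc.
  case: (eqVneq s r) => [Es|Hsr].
    have Hd : d < c.
      rewrite ltn_neqAle Hdc andbT; apply/eqP => E; move/eqP: Hxi; apply.
      by rewrite -P3 Es E ientry.
    move=> -> -> ->; rewrite entry_delta r1r eqxx /= Hd Es.
    split => //; first by apply/idP/idP => _; mlia.
    by right; split => //; mlia.
  case: (eqVneq s r.-1) => [Es|Hsr1].
    have Hd : d < c.
      rewrite ltn_neqAle Hdc andbT; apply/eqP => E; move/eqP: Hxj; apply.
      by rewrite -P3 Es E.
    move=> -> -> ->; rewrite entry_delta eqxx /= Hd Es.
    split => //; first by apply/idP/idP => _; mlia.
    by right; split => //; mlia.
  move=> -> -> ->; rewrite entry_delta (negbTE Hsr) (negbTE Hsr1) /=.
  by split => //; left.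
move=> -> -> ->; rewrite entry_delta.
have -> : d.+1 <= c = false by apply/negbTE; mlia.
by rewrite !andbF; split => //; left.
Qed.

Lemma lack_below z : z \in flatten t -> ~~ has_right t z -> colof t z < c -> r < rowof t z.
Proof.
move=> Hz Hh Hcz; rewrite ltnNge; apply/negP => Hle.
have := size_mono Hsh Hle; have H1 : c < size (rowseq t r) := csize.
move: Hh; rewrite /has_right; mlia.
Qed.

Lemma after_other x y : x \in flatten t -> x != i -> x != j ->
  y \in flatten t -> y != i -> y != j -> colof t x = colof t y ->
  after (delta i t) x y = after t x y.
Proof.
move=> Hx Hxi Hxj Hy Hyi Hyj Hcxy.
have [X1 X2 X3 X4] := data_other Hx Hxi Hxj.
have [Y1 Y2 Y3 Y4] := data_other Hy Hyi Hyj.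
rewrite /after /aft X2 X3 Y2 Y3.
case Hhx: (has_right t x); case Hhy: (has_right t y) => //=.
- case: Y4 => [->|[]]; last by rewrite Hhy.
  case: X4 => [->//|[Hc1 _ Hx1 Hx2]].
  have Hcy : colof t y < c by rewrite -Hcxy.
  have Hb := lack_below Hy (negbT Hhy) Hcy.
  by apply/idP/idP; mlia.
- case: X4 => [->|[]]; last by rewrite Hhx.
  case: Y4 => [->//|[Hc1 _ Hy1 Hy2]].
  have Hcx : colof t x < c by rewrite Hcxy.
  have Hb := lack_below Hx (negbT Hhx) Hcx.
  by apply/idP/idP; mlia.
- case: X4 => [->|[]]; last by rewrite Hhx.
  case: Y4 => [->|[]]; last by rewrite Hhy.
  by [].
Qed.

Lemma same_col_delta a b : same_col (delta i t) a b = same_col t a b.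
Proof.
rewrite /same_col !mem_delta.
case Ha: (a \in flatten t) => //; case Hb: (b \in flatten t) => //=.
have [A1 _ _ _] := data_delta Ha; have [B1 _ _ _] := data_delta Hb.
by rewrite A1 B1.
Qed.



Lemma is_inv_delta a b : is_inv (delta i t) a b = [&& a < b, same_col t a b & after (delta i t) a b].
Proof. by rewrite is_invE same_col_delta. Qed.

Lemma after_ij : after (delta i t) i j = after t j i /\ after (delta i t) j i = after t i j.
Proof.
have [I1 I2 I3 I4] := data_i; have [J1 J2 J3 J4] := data_j; have [K1 K2] := jpos.
by rewrite /after I1 I3 I4 J1 J3 J4 K1 Hr.
Qed.

Lemma after_k k : k \in flatten t -> k != i -> k != j -> colof t k = c ->
  [/\ after (delta i t) i k = after t j k, after (delta i t) k i = after t k j,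
      after (delta i t) j k = after t i k & after (delta i t) k j = after t k i].
Proof.
move=> Hk Hki Hkj Hck.
have [I1 I2 I3 I4] := data_i; have [J1 J2 J3 J4] := data_j; have [K1 K2] := jpos.
have [X1 X2 X3 X4] := data_other Hk Hki Hkj.
have X5 : rowof (delta i t) k = rowof t k.
  by case: X4 => // [[]]; rewrite Hck ltnn.
by rewrite /after I1 I3 I4 J1 J3 J4 K1 Hr X2 X3 X5.
Qed.

Lemma same_col_ij : same_col t i j.
Proof. have [K1 K2] := jpos; by rewrite /same_col Hi j_mem K2 Hc eqxx. Qed.

Lemma pair_sum : (is_inv t i j : nat) + is_inv t j i + (is_inv (delta i t) i j + is_inv (delta i t) j i) = 1.
Proof.
have [A B] := after_ij; have [K1 K2] := jpos.
have Hs := same_col_ij.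
have Hs' : same_col t j i by move: Hs; rewrite /same_col eq_sym andbA (andbC (i \in _)) -andbA.
rewrite !is_inv_delta !is_invE Hs Hs' A B /=.
rewrite (after_antisym Hu Hi j_mem ij_neq) ?K2 ?Hc //.
have Hne := ij_neq.
case: (after t i j); case: ltngtP Hne => //.
Qed.

Lemma per_k k : k \in flatten t -> k != i -> k != j ->
  all (fun k => (minn i j < k < maxn i j) ==> (is_inv t (minn i j) k (+) is_inv t k (maxn i j))) (colseq t c) ->
  (is_inv (delta i t) i k : nat) + is_inv (delta i t) k i + is_inv (delta i t) j k + is_inv (delta i t) k j =
  (is_inv t i k : nat) + is_inv t k i + is_inv t j k + is_inv t k j.
Proof.
move=> Hk Hki Hkj H3.
have [K1 K2] := jpos.
have Hjm := j_mem.
rewrite !is_inv_delta !is_invE.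
case: (eqVneq (colof t k) c) => Hck; last first.
  have F1 : forall a b, colof t a != colof t b -> same_col t a b = false.
    by move=> a b Hab; rewrite /same_col (negbTE Hab) !andbF.
  by rewrite !F1 // ?Hc ?K2 // eq_sym.
have [A1 A2 A3 A4] := after_k Hk Hki Hkj Hck.
have S1 : forall a b, a \in flatten t -> b \in flatten t -> colof t a = c -> colof t b = c -> same_col t a b.
  by move=> a b Ha Hb Ea Eb; rewrite /same_col Ha Hb Ea Eb eqxx.
rewrite !S1 // A1 A2 A3 A4 /=.
have Ak : after t k i = ~~ after t i k.
  by apply: after_antisym => //; [rewrite eq_sym | rewrite Hck Hc].
have Bk : after t k j = ~~ after t j k.
  by apply: after_antisym => //; [rewrite eq_sym | rewrite Hck K2].
rewrite Ak Bk.
have Hkc : k \in colseq t c by rewrite -Hck; apply: mem_colseq.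
move/allP: H3 => /(_ k Hkc).
rewrite !is_invE.
have Hne := ij_neq.
case: (ltngtP i j) Hne => Hij Hne; last by move: Hne; rewrite ?Hij ?eqxx.
- rewrite !S1 // Bk /= => H.
  apply: bool_k => //; move=> Hb; move/implyP: H => /(_ Hb).
  by case/andP: Hb => -> ->.
- rewrite !S1 // Ak /= => H.
  have := @bool_k j i k (after t j k) (after t i k) Hij Hkj Hki.
  have HH : j < k < i -> (j < k) && after t j k (+) (k < i) && ~~ after t i k.
    by move=> Hb; move/implyP: H => /(_ Hb); case/andP: Hb => -> ->.
  move=> /(_ HH); mlia.
Qed.

Lemma ninv_delta :
  all (fun k => (minn i j < k < maxn i j) ==> (is_inv t (minn i j) k (+) is_inv t k (maxn i j))) (colseq t c) ->
  n_inv (delta i t) + ((is_inv t i j : nat) + is_inv t j i) =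
  n_inv t + ((is_inv (delta i t) i j : nat) + is_inv (delta i t) j i).
Proof.
move=> H3.
rewrite !n_invE (perm_big _ perm_delta).
under eq_bigr => a _ do rewrite (perm_big _ perm_delta).
rewrite !(sum2_decomp _ Hu Hi j_mem ij_neq).
set F := [seq x <- _ | _].
have E1 : \sum_(k <- F) ((is_inv (delta i t) i k : nat) + is_inv (delta i t) k i + is_inv (delta i t) j k + is_inv (delta i t) k j) =
          \sum_(k <- F) ((is_inv t i k : nat) + is_inv t k i + is_inv t j k + is_inv t k j).
  apply: eq_big_seq => k; rewrite mem_filter => /andP [/andP [Hki Hkj] Hk].
  exact: per_k.
have E2 : \sum_(a <- F) \sum_(b <- F) (is_inv (delta i t) a b : nat) = \sum_(a <- F) \sum_(b <- F) (is_inv t a b : nat).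
  apply: eq_big_seq => a; rewrite mem_filter => /andP [/andP [Hai Haj] Ha].
  apply: eq_big_seq => b; rewrite mem_filter => /andP [/andP [Hbi Hbj] Hb].
  rewrite is_inv_delta is_invE.
  case Hs: (same_col t a b); rewrite ?andbF //=.
  have Hcab : colof t a = colof t b by move: Hs; rewrite /same_col => /and3P [_ _ /eqP].
  by rewrite after_other.
rewrite E1 E2 !is_invE !ltnn /=; mlia.
Qed.

End Delta.

Definition good (t : tableau) := [&& sorted geq (shape t), uniq (flatten t),
  0 \notin flatten t & all (sorted ltn) t].

Lemma rs_good lam t : is_partition lam -> row_standard lam t -> good t.
Proof.
move=> /andP [Hl _] /and3P [/eqP Hs Hp Ha].
rewrite /good Hs Hl Ha (perm_uniq Hp) iota_uniq (perm_mem Hp) mem_iota /=.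
by [].
Qed.

Lemma colseq_subseq t d : subseq (colseq t d) (flatten t).
Proof.
elim: t => [|row t IH] //=; rewrite /colseq /=.
case: ifP => Hd /=.
  rewrite -cat1s; apply: cat_subseq; [by rewrite sub1seq mem_nth | exact: IH].
rewrite -[X in subseq X _]cat0s; apply: cat_subseq; [exact: sub0seq | exact: IH].
Qed.

Lemma uniq_colseq t d : uniq (flatten t) -> uniq (colseq t d).
Proof. exact: subseq_uniq (colseq_subseq t d). Qed.

Lemma mem_colseqE t d x : uniq (flatten t) ->
  (x \in colseq t d) = (x \in flatten t) && (colof t x == d).
Proof.
move=> Hu; apply/idP/idP.
  move=> /mapP [row]; rewrite mem_filter => /andP [Hd Hrow] ->.
  have Hs : index row t < size t by rewrite index_mem.
  have Er : rowseq t (index row t) = row by rewrite /rowseq nth_index.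
  have Hd' : d < size (rowseq t (index row t)) by rewrite Er.
  have [_ C] := pos_entry Hu Hs Hd'.
  have Hm := entry_mem Hs Hd'.
  have Ex : nth 0 row d = entry t (index row t) d by rewrite /entry Er.
  by rewrite Ex Hm C eqxx.
by move=> /andP [Hx /eqP <-]; apply: mem_colseq.
Qed.

Section Good.
Variables (t : tableau) (i : nat).
Hypotheses (Hg : good t) (HD : in_D i t).

Let Hsh : sorted geq (shape t). Proof. by case/and4P: Hg. Qed.
Let Hu : uniq (flatten t). Proof. by case/and4P: Hg. Qed.
Let H0 : 0 \notin flatten t. Proof. by case/and4P: Hg. Qed.
Let Ha : all (sorted ltn) t. Proof. by case/and4P: Hg. Qed.
Let Hi : i \in flatten t. Proof. by case/and5P: HD. Qed.
Let Hr0 : 0 < rowof t i. Proof. by case/and5P: HD. Qed.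

Lemma st_delta : st (delta i t) = st t.
Proof.
have E := erefl (rowof t i); have E' := erefl (colof t i).
rewrite /st (size_delta Hsh Hu E E' Hi Hr0).
apply: eq_mkseq => s; rewrite (size_row_delta Hsh Hu E E' Hi Hr0).
apply: eq_mkseq => d; congr nth.
apply/perm_sortP; [exact: leq_total | exact: leq_trans | exact: anti_leq |].
apply: uniq_perm; [apply: uniq_colseq; exact: uniq_delta | exact: uniq_colseq |].
move=> x; rewrite !mem_colseqE //; last exact: uniq_delta.
rewrite (mem_delta Hsh Hu E E' Hi Hr0).
case Hx: (x \in flatten t) => //=.
by have [-> _ _ _] := data_delta Hsh Hu E E' Hi Hr0 Hx.
Qed.

Lemma good_delta : good (delta i t).
Proof.
have [r E] : exists r, rowof t i = r by eexists.
have [c E'] : exists c, colof t i = c by eexists.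
have Hr0' : 0 < r by rewrite -E.
have HD' := HD.
have Hsz := size_delta Hsh Hu E E' Hi Hr0'.
have Hrs := size_row_delta Hsh Hu E E' Hi Hr0'.
have Hent := entry_delta Hsh Hu E E' Hi Hr0'.
have [J1 J2] := jpos Hsh Hu E E' Hi Hr0'.
have H1 : c < size (rowseq t r) := csize Hsh Hu E E' Hi Hr0'.
have H2 : size (rowseq t r) <= size (rowseq t r.-1) := RU Hsh Hu E E' Hi Hr0'.
have Hie : entry t r c = i := ientry Hsh Hu E E' Hi Hr0'.
move: HD'; rewrite /in_D E E' => /and5P [_ _ C1 C2 _].
have Hshape : shape (delta i t) = shape t.
  rewrite /shape; apply: (@eq_from_nth _ 0); first by rewrite (size_map size (delta i t)) (size_map size t) Hsz.
  move=> s; rewrite (size_map size (delta i t)) Hsz => Hs.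
  rewrite (nth_map [::] 0 size (s := delta i t)) ?Hsz // (nth_map [::] 0 size (s := t)) //; exact: Hrs.
rewrite /good Hshape Hsh (uniq_delta Hsh Hu E E' Hi Hr0') (mem_delta Hsh Hu E E' Hi Hr0') H0 /=.
apply/(all_nthP [::]) => s; rewrite Hsz => Hs.
apply/(sortedP 0) => d; rewrite -/(rowseq _ s) Hrs => Hd.
rewrite -/(entry _ s d) -/(entry _ s d.+1) !Hent.
case: (eqVneq s r) => [Es|Hsr].
  subst s; rewrite /=.
  case: (ltngtP d c) => Hdc.
  - apply: row_lt => //; mlia.
  - rewrite !andbF.
    exact: row_lt.
  - subst d; rewrite !andbF /=.
    move: C1; rewrite /has_right /right_nb E' E Hd /= => H.
    exact: H.
rewrite /=.
case: (eqVneq s r.-1) => [Es|Hsr1].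
  subst s; rewrite /=.
  case: (ltngtP d c) => Hdc.
  - apply: row_lt => //; mlia.
  - exact: row_lt.
  - subst d; rewrite ?leqnn ?ltnn ?andbF /= ?Hie.
    move: C2; rewrite /has_right /right_nb J1 J2 Hd /= => H.
    exact: H.
by rewrite /=; apply: row_lt.
Qed.

Lemma ninv_delta_le : n_inv t <= n_inv (delta i t) + 1.
Proof.
have E := erefl (rowof t i); have E' := erefl (colof t i).
have HD' := HD; move: HD'; rewrite /in_D => /and5P [_ _ _ _ C3].
have := ninv_delta Hsh Hu E E' Hi Hr0 C3.
have := pair_sum Hsh Hu E E' Hi Hr0.
mlia.
Qed.

End Good.

Definition colsorted_at (t : tableau) d := forall s, s.+1 < size t ->
  d < size (rowseq t s.+1) -> entry t s d < entry t s.+1 d.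

Lemma col_mono t d s1 s2 : sorted geq (shape t) -> colsorted_at t d ->
  s1 < s2 -> s2 < size t -> d < size (rowseq t s2) -> entry t s1 d < entry t s2 d.
Proof.
move=> Hsh Hcs; elim: s2 => [|n IH] //.
move=> H1 H2 H3.
have Hn := Hcs n H2 H3.
case: (eqVneq s1 n) => [->//|Hne].
have H1' : s1 < n by rewrite ltn_neqAle Hne /= -ltnS.
have H2' : n < size t by apply: ltn_trans H2.
have H3' : d < size (rowseq t n) by apply: leq_trans H3 (size_mono Hsh (leqnSn n)).
exact: ltn_trans (IH H1' H2' H3') Hn.
Qed.

Lemma after_below t x y : sorted geq (shape t) -> uniq (flatten t) ->
  colsorted_at t (colof t x).+1 -> x \in flatten t -> y \in flatten t -> x != y ->
  colof t x = colof t y -> after t x y = (rowof t y < rowof t x).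
Proof.
move=> Hsh Hu Hcs Hx Hy Hxy Hc.
have [X1 X2 X3] := flatten_pos Hx; have [Y1 Y2 Y3] := flatten_pos Hy.
have Hr : rowof t x != rowof t y.
  apply/eqP => E; move/eqP: Hxy; apply; rewrite -X3 -Y3 E Hc //.
rewrite /after /aft.
case Hhx: (has_right t x); case Hhy: (has_right t y) => //=.
move: Hhx Hhy; rewrite /has_right /right_nb -Hc => Hhx Hhy.
case: (ltngtP (rowof t x) (rowof t y)) Hr => // Hlt _.
  have := col_mono Hsh Hcs Hlt Y1 Hhy; case: ltngtP => //.
have := col_mono Hsh Hcs Hlt X1 Hhx; case: ltngtP => //.
Qed.

Lemma ninv0 t : good t -> (forall d, colsorted_at t d) -> n_inv t = 0.
Proof.
move=> /and4P [Hsh Hu H0 Ha] Hcs.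
rewrite n_invE; apply: big1_seq => a /andP [_ Ha'].
apply: big1_seq => b /andP [_ Hb'].
rewrite is_invE.
case Hab: (a < b) => //=.
case Hs: (same_col t a b) => //=.
have Hc : colof t a = colof t b by move: Hs; rewrite /same_col => /and3P [_ _ /eqP].
have Hne : a != b by apply/eqP => E; rewrite E ltnn in Hab.
rewrite after_below //.
case Hlt: (rowof t b < rowof t a) => //.
have [A1 A2 A3] := flatten_pos Ha'; have [B1 B2 B3] := flatten_pos Hb'.
have := col_mono Hsh (Hcs (colof t a)) Hlt A1 A2.
by rewrite A3 Hc B3; move: Hab; case: ltngtP.
Qed.

Lemma nth_colseq t d s : sorted geq (shape t) -> s < size t -> d < size (rowseq t s) ->
  nth 0 (colseq t d) s = entry t s d.
Proof.
elim: t s => [|row t IH] s //= Hsh Hs Hd.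
have Hsh' : sorted geq (shape t) by move: Hsh; rewrite /shape /=; apply: path_sorted.
have Hd0 : d < size row.
  have := @size_mono (row :: t) 0 s Hsh (leq0n s); rewrite /rowseq /=; move=> H; exact: leq_trans Hd H.
rewrite /colseq /= Hd0 /=.
case: s Hs Hd => [|s] //= Hs Hd.
exact: IH.
Qed.

Lemma size_colseq t d s : sorted geq (shape t) -> s < size (colseq t d) ->
  s < size t /\ d < size (rowseq t s).
Proof.
elim: t s => [|row t IH] s //= Hsh.
have Hsh' : sorted geq (shape t) by move: Hsh; rewrite /shape /=; apply: path_sorted.
rewrite /colseq /=; case: ifP => Hd0 /=.
  case: s => [|s] //= Hs.
  by have [A B] := IH s Hsh' Hs.
move=> Hs; have [A B] := IH s Hsh' Hs.
have := @size_mono (row :: t) 0 s.+1 Hsh (leq0n _); rewrite /rowseq /=.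
move=> H; move: (leq_trans B H); rewrite Hd0.
by [].
Qed.

Lemma colseq_sorted t d : sorted geq (shape t) -> colsorted_at t d -> sorted leq (colseq t d).
Proof.
move=> Hsh Hcs; apply/(sortedP 0) => k Hk.
have [A B] := size_colseq Hsh Hk.
have B' : d < size (rowseq t k) by apply: leq_trans B (size_mono Hsh (leqnSn k)).
rewrite !nth_colseq //; last by apply: ltn_trans A.
exact: ltnW (Hcs k A B).
Qed.

Lemma st_id t : good t -> (forall d, colsorted_at t d) -> st t = t.
Proof.
move=> /and4P [Hsh Hu H0 Ha] Hcs.
rewrite /st -[RHS](mkseq_nth [::] t); apply: eq_mkseq => s.
apply: (@eq_from_nth _ 0); first by rewrite size_mkseq.
move=> d; rewrite size_mkseq => Hd.
have Hs : s < size t by case: ltnP => // H; move: Hd; rewrite /rowseq nth_default.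
rewrite nth_mkseq // sorted_sort; last exact: colseq_sorted.
  exact: nth_colseq.
exact: leq_trans.
Qed.

Lemma size_st t : size (st t) = size t.
Proof. by rewrite /st size_mkseq. Qed.

Lemma rowseq_st t s : s < size t ->
  rowseq (st t) s = mkseq (fun c => nth 0 (sort leq (colseq t c)) s) (size (rowseq t s)).
Proof. by move=> Hs; rewrite /rowseq /st nth_mkseq. Qed.

Lemma size_row_st t s : size (rowseq (st t) s) = size (rowseq t s).
Proof.
case: (ltnP s (size t)) => Hs; first by rewrite rowseq_st // size_mkseq.
by rewrite /rowseq !nth_default ?size_st.
Qed.

Lemma st_colsorted t : good (st t) -> forall d, colsorted_at (st t) d.
Proof.
move=> /and4P [Hsh Hu H0 Ha] d s; rewrite size_st => Hs; rewrite size_row_st => Hd.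
have Hs' : s < size t by apply: ltn_trans Hs.
have Hd' : d < size (rowseq t s).
  rewrite -size_row_st; apply: leq_trans (size_mono Hsh (leqnSn s)); by rewrite size_row_st.
set S := sort leq (colseq t d).
have E1 : entry (st t) s d = nth 0 S s by rewrite /entry rowseq_st // nth_mkseq.
have E2 : entry (st t) s.+1 d = nth 0 S s.+1 by rewrite /entry rowseq_st // nth_mkseq.
have Hz : s.+1 < size S.
  rewrite ltnNge; apply/negP => H.
  have Hm : entry (st t) s.+1 d \in flatten (st t) by apply: entry_mem; rewrite ?size_st ?size_row_st.
  by move: Hm; rewrite E2 nth_default // (negbTE H0).
have Hle : nth 0 S s <= nth 0 S s.+1.
  apply: (sorted_leq_nth leq_trans leqnn 0 (sort_sorted leq_total _)) => //; rewrite inE //.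
  exact: ltn_trans Hz.
have Hne : entry (st t) s d != entry (st t) s.+1 d.
  apply/eqP => E.
  have := @entry_inj (st t) s d s.+1 d Hu; rewrite !size_st !size_row_st.
  by move=> /(_ Hs' Hd' Hs Hd E) [/eqP]; rewrite eqn_leq ltnn andbF.
by rewrite ltn_neqAle Hne E1 E2 Hle.
Qed.

Definition descb (t : tableau) d := has (fun s => (d < size (rowseq t s.+1)) && (entry t s.+1 d < entry t s d))
  (iota 0 (size t)).

Lemma nodesc_sorted t d : good t -> ~~ descb t d -> colsorted_at t d.
Proof.
move=> /and4P [Hsh Hu H0 Ha] /hasPn Hn s Hs Hd.
have Hs' : s < size t by apply: ltn_trans Hs.
have Hd' : d < size (rowseq t s) by apply: leq_trans Hd (size_mono Hsh (leqnSn s)).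
have := Hn s; rewrite mem_iota add0n Hs' /= => /(_ isT); rewrite Hd /= -leqNgt => Hle.
rewrite ltn_neqAle Hle andbT; apply/eqP => E.
have := @entry_inj t s d s.+1 d Hu Hs' Hd' Hs Hd E.
by case=> /eqP; rewrite eqn_leq ltnn andbF.
Qed.

Lemma step_exists t c s : good t -> s.+1 < size t -> c < size (rowseq t s.+1) ->
  entry t s.+1 c < entry t s c -> colsorted_at t c.+1 ->
  in_D (entry t s.+1 c) t /\ is_inv t (entry t s.+1 c) (entry t s c).
Proof.
move=> Hg Hs Hc Hlt Hcs; have /and4P [Hsh Hu H0 Ha] := Hg.
set i := entry t s.+1 c; set j := entry t s c.
have Hs' : s < size t by apply: ltn_trans Hs.
have Hc' : c < size (rowseq t s) by apply: leq_trans Hc (size_mono Hsh (leqnSn s)).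
have [Ri Ci] := pos_entry Hu Hs Hc.
have [Rj Cj] := pos_entry Hu Hs' Hc'.
have Hi : i \in flatten t := entry_mem Hs Hc.
have Hj : j \in flatten t := entry_mem Hs' Hc'.
have Hij : i != j by rewrite neq_ltn Hlt.
have Hcs' : colsorted_at t (colof t i).+1 by rewrite Ci.
have Aij : after t i j = true.
  by rewrite after_below // ?Ri ?Rj ?Ci ?Cj ?ltnSn.
have Hsc : same_col t i j by rewrite /same_col Hi Hj Ci Cj eqxx.
split; last by rewrite is_invE Hlt Hsc Aij.
rewrite /in_D Ri Ci /= -/j Hi /=.
apply/and3P; split.
- apply/implyP; rewrite /has_right /right_nb Ri Ci => Hh.
  have Hh' : c.+1 < size (rowseq t s) by apply: leq_trans Hh (size_mono Hsh (leqnSn s)).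
  apply: ltn_trans (row_lt Ha (ltnSn c) Hh') _.
  exact: Hcs.
- apply/implyP; rewrite /has_right /right_nb Rj Cj => Hh.
  exact: ltn_trans Hlt (row_lt Ha (ltnSn c) Hh).
- apply/allP => k Hk; rewrite mem_colseqE // in Hk; case/andP: Hk => Hk /eqP Ck.
  have -> : minn i j = i by apply/minn_idPl; apply: ltnW.
  have -> : maxn i j = j by apply/maxn_idPr; apply: ltnW.
  apply/implyP => /andP [Hik Hkj].
  have Hki : i != k by rewrite neq_ltn Hik.
  have Hkj' : k != j by rewrite neq_ltn Hkj.
  rewrite !is_invE Hik Hkj /=.
  have -> : same_col t i k by rewrite /same_col Hi Hk Ci Ck eqxx.
  have -> : same_col t k j by rewrite /same_col Hk Hj Cj Ck eqxx.
  rewrite /= after_below // ?Ci ?Ck //.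
  have Hcs'' : colsorted_at t (colof t k).+1 by rewrite Ck.
  rewrite after_below // ?Ck ?Cj // Ri Rj.
  by rewrite ltnS; case: leqP.
Qed.

Lemma ninv_step t c s : good t -> s.+1 < size t -> c < size (rowseq t s.+1) ->
  entry t s.+1 c < entry t s c -> colsorted_at t c.+1 ->
  n_inv (delta (entry t s.+1 c) t) + 1 = n_inv t.
Proof.
move=> Hg Hs Hc Hlt Hcs; have /and4P [Hsh Hu H0 Ha] := Hg.
have [HD Hinv] := step_exists Hg Hs Hc Hlt Hcs.
set i := entry t s.+1 c in HD Hinv *.
have [Ri Ci] : rowof t i = s.+1 /\ colof t i = c by apply: pos_entry.
have Hi : i \in flatten t := entry_mem Hs Hc.
have Hr0 : 0 < s.+1 by [].
move: (HD); rewrite /in_D Ri Ci => /and5P [_ _ _ _ C3].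
have := ninv_delta Hsh Hu Ri Ci Hi Hr0 C3.
have := pair_sum Hsh Hu Ri Ci Hi Hr0.
rewrite /= Hinv; have -> : nat_of_bool true = 1 by []; mlia.
Qed.

Lemma apply_deltas_cat s1 s2 t : apply_deltas (s1 ++ s2) t =
  match apply_deltas s2 t with Some u => apply_deltas s1 u | None => None end.
Proof.
elim: s1 => [|i s1 IH] /=; first by case: (apply_deltas s2 t).
rewrite IH; by case: (apply_deltas s2 t).
Qed.

Lemma lower_bound s : forall t v, good t -> apply_deltas s t = Some v ->
  [/\ good v, st v = st t & n_inv t <= size s + n_inv v].
Proof.
elim: s => [|i s IH] t v Hg /=; first by case=> <-; split.
case E: (apply_deltas s t) => [u|] //.
case HD: (in_D i u) => //; case=> <-.
have [Gu Su Nu] := IH t u Hg E.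
split; first exact: good_delta.
  by rewrite st_delta.
have := ninv_delta_le Gu HD; mlia.
Qed.

Lemma exists_seq n : forall t, good t -> n_inv t = n ->
  exists s, apply_deltas s t = Some (st t) /\ size s = n.
Proof.
elim: n => [|n IH] t Hg Hn.
all: set W := size (rowseq t 0).
all: have /and4P [Hsh Hu H0 Ha] := Hg.
all: have Hbnd : forall d, descb t d -> d < W.
all: try by move=> d /hasP [s _ /andP [H _]]; apply: leq_trans H (size_mono Hsh (leq0n _)).
all: case Hex: (has (descb t) (iota 0 W)).
- move/hasP: Hex => [d _ Hd].
  have exP : exists d, descb t d by exists d.
  case: (ex_maxnP exP (fun d H => ltnW (Hbnd d H))) => c Hc Hmax.
  move/hasP: Hc => [s _ /andP [Hc Hlt]].
  have Hs : s.+1 < size t by case: ltnP => // H; move: Hc; rewrite /rowseq nth_default.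
  have Hcs : colsorted_at t c.+1.
    apply: nodesc_sorted => //; apply/negP => H; have := Hmax _ H; by rewrite ltnn.
  have := ninv_step Hg Hs Hc Hlt Hcs; rewrite Hn; mlia.
- exists [::]; split => //=.
  rewrite st_id //.
  move=> d; apply: nodesc_sorted => //; apply/negP => Hd.
  have Hdw := Hbnd d Hd.
  by move/hasPn: Hex => /(_ d); rewrite mem_iota add0n Hdw => /(_ isT); rewrite Hd.
- move/hasP: Hex => [d _ Hd].
  have exP : exists d, descb t d by exists d.
  case: (ex_maxnP exP (fun d H => ltnW (Hbnd d H))) => c Hc Hmax.
  move/hasP: Hc => [s _ /andP [Hc Hlt]].
  have Hs : s.+1 < size t by case: ltnP => // H; move: Hc; rewrite /rowseq nth_default.
  have Hcs : colsorted_at t c.+1.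
    apply: nodesc_sorted => //; apply/negP => H; have := Hmax _ H; by rewrite ltnn.
  have Hstep := ninv_step Hg Hs Hc Hlt Hcs.
  set i := entry t s.+1 c in Hstep.
  have [HD _] := step_exists Hg Hs Hc Hlt Hcs.
  have Gu := good_delta Hg HD.
  have Hn' : n_inv (delta i t) = n by move: Hstep; rewrite Hn; mlia.
  have [s1 [E1 E2]] := IH _ Gu Hn'.
  exists (s1 ++ [:: i]); split; last by rewrite size_cat E2 addn1.
  by rewrite apply_deltas_cat /= HD E1 st_delta.
- have Hcs : forall d, colsorted_at t d.
    move=> d; apply: nodesc_sorted => //; apply/negP => Hd.
    have Hdw := Hbnd d Hd.
    by move/hasPn: Hex => /(_ d); rewrite mem_iota add0n Hdw => /(_ isT); rewrite Hd.
  by move: Hn; rewrite ninv0.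
Qed.

Theorem proposition2p2 (lam : seq nat) (t : tableau) :
  is_partition lam -> row_standard lam t ->
  (exists s : seq nat, apply_deltas s t = Some (st t) /\ size s = n_inv t) /\
  (forall s : seq nat, apply_deltas s t = Some (st t) -> n_inv t <= size s).
Proof.
move=> Hp Hrs; have Hg := rs_good Hp Hrs.
split; first exact: exists_seq.
move=> s Hs; have [Gv _ Nv] := lower_bound Hg Hs.
have := ninv0 Gv (st_colsorted Gv); move: Nv => /[swap] ->.
by rewrite addn0.
Qed.
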